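(* Let $(V,\mathcal H,\iota,W)$ be a generalized functional theory. The ensemble functional $\mathcal F_e$ is the lower convex envelope of both the Hohenberg–Kohn functional $\mathcal F_{HK}$ and the pure functional $\mathcal F_p$; that is, with all three functionals extended to $V^*$ by $+\infty$ outside their domains, $\mathcal F_{HK}^{**}=\mathcal F_p^{**}=\mathcal F_e$.
   Context: A generalized functional theory is a tuple $(V,\mathcal H,\iota,W)$ with $V$ a finite-dimensional real vector space, $\mathcal H$ a finite-dimensional complex Hilbert space, $\iota:V\to i\mathfrak u(\mathcal H)$ linear into the Hermitian operators, $W$ Hermitian. Density operators are regarded as elements of $(i\mathfrak u(\mathcal H))^*$ via the trace pairing; $\iota^*$ is the dual map. $\mathcal P$ = pure states, $\mathcal E$ = density operators, $\mathbf G_p(v)$ = pure ground states of $\iota(v)+W$. $\mathcal F_{HK}$ is defined on $\bigcup_v\iota^*(\mathbf G_p(v))$ by $\mathcal F_{HK}(\rho)=\mathrm{Tr}(\Gamma W)$ for any $v$ and $\Gamma\in\mathbf G_p(v)$ with $\iota^*(\Gamma)=\rho$ (independent of choices); $\mathcal F_p(\rho)=\min\{\mathrm{Tr}(\Gamma W):\Gamma\in\mathcal P,\iota^*(\Gamma)=\rho\}$ on $\iota^*(\mathcal P)$; $\mathcal F_e(\rho)=\min\{\mathrm{Tr}(\Gamma W):\Gamma\in\mathcal E,\iota^*(\Gamma)=\rho\}$ on $\iota^*(\mathcal E)$. For $g:V^*\to\mathbb R\cup\{+\infty\}$, $g^*(v)=\sup_\rho(\langle\rho,v\rangle-g(\rho))$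 is the convex conjugate and $g^{**}$ the biconjugate, i.e. the lower (closed) convex envelope of $g$. *)

(* Defs.v *)
From mathcomp Require Import all_boot all_algebra.
From mathcomp Require Import all_classical all_reals ereal.
From mathcomp Require Import complex.
Set Implicit Arguments. Unset Strict Implicit. Unset Printing Implicit Defensive.
Import GRing.Theory Num.Theory.
Local Open Scope ring_scope.
Local Open Scope complex_scope.
Local Open Scope classical_set_scope.

(* Conventions:  V = 'rV[R]_d (coordinates of a d-dimensional real space),
   V^* = 'rV[R]_d with the pairing [pairing rho v] = sum_k rho_k v_k,
   H = C^n with C = R[i]; operators on H are 'M[R[i]]_n. *)

Section GFT.
Variable R : realType.
Variables (n d : nat).

Definition adj (p q : nat) (A : 'M[R[i]]_(p, q)) : 'M[R[i]]_(q, p) :=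
  (map_mx conjc A)^T.

Definition is_hermitian (A : 'M[R[i]]_n) : Prop := adj A = A.

Definition psd (A : 'M[R[i]]_n) : Prop :=
  is_hermitian A /\ forall x : 'cV[R[i]]_n, 0 <= (adj x *m A *m x) 0 0.

Definition density (G : 'M[R[i]]_n) : Prop := psd G /\ \tr G = 1.

Definition pure_state (G : 'M[R[i]]_n) : Prop :=
  exists x : 'cV[R[i]]_n, (adj x *m x) 0 0 = 1 /\ G = x *m adj x.

(* real part of Tr(G A) (real for Hermitian G, A) *)
Definition energy (G A : 'M[R[i]]_n) : R := complex.Re (\tr (G *m A)).

Definition pairing (rho v : 'rV[R]_d) : R := \sum_(k < d) rho 0 k * v 0 k.

(* dual map iota^* : (i u(H))^* -> V^*, defined by <iota^* G, v> = Tr(G iota(v)) *)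
Definition istar (iota : 'rV[R]_d -> 'M[R[i]]_n) (G : 'M[R[i]]_n) : 'rV[R]_d :=
  \row_(k < d) energy G (iota (delta_mx 0 k)).

Definition ground_pure (H G : 'M[R[i]]_n) : Prop :=
  pure_state G /\ forall G', pure_state G' -> energy G H <= energy G' H.

Local Open Scope ereal_scope.

(* Functionals, extended by +oo outside their domains (inf of empty set = +oo) *)
Definition F_HK (iota : 'rV[R]_d -> 'M[R[i]]_n) (W : 'M[R[i]]_n)
  (rho : 'rV[R]_d) : \bar R :=
  ereal_inf [set (energy G W)%:E | G in
    [set G | exists v, ground_pure (iota v + W) G /\ istar iota G = rho]].

Definition F_p (iota : 'rV[R]_d -> 'M[R[i]]_n) (W : 'M[R[i]]_n)
  (rho : 'rV[R]_d) : \bar R :=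
  ereal_inf [set (energy G W)%:E | G in
    [set G | pure_state G /\ istar iota G = rho]].

Definition F_e (iota : 'rV[R]_d -> 'M[R[i]]_n) (W : 'M[R[i]]_n)
  (rho : 'rV[R]_d) : \bar R :=
  ereal_inf [set (energy G W)%:E | G in
    [set G | density G /\ istar iota G = rho]].

Definition conjugate (g : 'rV[R]_d -> \bar R) (v : 'rV[R]_d) : \bar R :=
  ereal_sup [set (pairing rho v)%:E - g rho | rho in [set: 'rV[R]_d]].

Definition biconjugate (g : 'rV[R]_d -> \bar R) (rho : 'rV[R]_d) : \bar R :=
  ereal_sup [set (pairing rho v)%:E - conjugate g v | v in [set: 'rV[R]_d]].

End GFT.

(* Main.v *)
Require Import Defs.
From mathcomp Require Import all_boot all_algebra.
From mathcomp Require Import all_classical all_reals ereal.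
From mathcomp Require Import complex.
From mathcomp Require Import topology normedtype matrix_normedtype derive.
From mathcomp Require Import sesquilinear spectral.
From mathcomp Require Import ring lra.
Set Implicit Arguments. Unset Strict Implicit. Unset Printing Implicit Defensive.
Import order.Order.TTheory GRing.Theory Num.Theory numFieldNormedType.Exports.
Local Open Scope ring_scope.
Local Open Scope complex_scope.
Local Open Scope classical_set_scope.

Section Basics.
Variable R : realType.
Local Notation C := R[i].
Local Notation Re := complex.Re.
Local Notation Im := complex.Im.

Lemma cReD (x y : C) : Re (x + y) = Re x + Re y. Proof. by case: x => ? ?; case: y => ? ?; rewrite /= ?mulrN ?opprK.
 Qed.
Lemma cImD (x y : C) : Im (x + y) = Im x + Im y. Proof. by case: x => ? ?; case: y => ? ?; rewrite /= ?mulrN ?opprK.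
 Qed.
Lemma cReN (x : C) : Re (- x) = - Re x. Proof. by case: x. Qed.
Lemma cImN (x : C) : Im (- x) = - Im x. Proof. by case: x. Qed.
Lemma cReB (x y : C) : Re (x - y) = Re x - Re y. Proof. by rewrite cReD cReN. Qed.
Lemma cImB (x y : C) : Im (x - y) = Im x - Im y. Proof. by rewrite cImD cImN. Qed.
Lemma cReM (x y : C) : Re (x * y) = Re x * Re y - Im x * Im y. Proof. by case: x => ? ?; case: y => ? ?; rewrite /= ?mulrN ?opprK.
 Qed.
Lemma cImM (x y : C) : Im (x * y) = Re x * Im y + Im x * Re y. Proof. by case: x => ? ?; case: y => ? ?; rewrite /= ?mulrN ?opprK.
 Qed.
Lemma cRe0 : Re (0 : C) = 0. Proof. by []. Qed.
Lemma cIm0 : Im (0 : C) = 0. Proof. by []. Qed.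
Lemma cReR (r : R) : Re (r%:C) = r. Proof. by []. Qed.
Lemma cImR (r : R) : Im (r%:C) = 0. Proof. by []. Qed.
Lemma cRe_sum I (s : seq I) (P : pred I) (F : I -> C) :
  Re (\sum_(i <- s | P i) F i) = \sum_(i <- s | P i) Re (F i).
Proof. exact: (big_morph _ cReD cRe0). Qed.
Lemma cIm_sum I (s : seq I) (P : pred I) (F : I -> C) :
  Im (\sum_(i <- s | P i) F i) = \sum_(i <- s | P i) Im (F i).
Proof. exact: (big_morph _ cImD cIm0). Qed.
Lemma cReMR (r : R) (x : C) : Re (r%:C * x) = r * Re x.
Proof. by rewrite cReM cReR cImR mul0r subr0. Qed.
Lemma cReJ (x : C) : Re (conjc x) = Re x. Proof. by case: x. Qed.
Lemma cImJ (x : C) : Im (conjc x) = - Im x. Proof. by case: x. Qed.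
Lemma conjcD (x y : C) : conjc (x + y) = conjc x + conjc y. Proof. exact: rmorphD. Qed.
Lemma conjcM (x y : C) : conjc (x * y) = conjc x * conjc y. Proof. exact: rmorphM. Qed.
Lemma conjcKK (x : C) : conjc (conjc x) = x. Proof. exact: conjcK. Qed.
Lemma conjcR (r : R) : conjc (r%:C) = r%:C. Proof. exact: conjc_real. Qed.
Lemma conjc_sum I (s : seq I) (P : pred I) (F : I -> C) :
  conjc (\sum_(i <- s | P i) F i) = \sum_(i <- s | P i) conjc (F i).
Proof. exact: rmorph_sum. Qed.
Lemma cge0C (x : C) : (0 <= x) = (Im x == 0) && (0 <= Re x).
Proof. by rewrite lecE /= eq_sym. Qed.

Lemma adj_entry p q (A : 'M[C]_(p, q)) i j : adj A i j = conjc (A j i).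
Proof. by rewrite /adj !mxE. Qed.
Lemma adj_mul p q r (A : 'M[C]_(p, q)) (B : 'M[C]_(q, r)) : adj (A *m B) = adj B *m adj A.
Proof.
apply/matrixP => i j; rewrite !mxE conjc_sum; apply: eq_bigr => k _.
by rewrite !mxE conjcM mulrC.
Qed.
Lemma adj_inv p q (A : 'M[C]_(p, q)) : adj (adj A) = A.
Proof. by apply/matrixP => i j; rewrite !adj_entry conjcK. Qed.
Lemma adj_add p q (A B : 'M[C]_(p, q)) : adj (A + B) = adj A + adj B.
Proof. by apply/matrixP => i j; rewrite /adj !mxE conjcD. Qed.
Lemma adj_scale p q (c : C) (A : 'M[C]_(p, q)) : adj (c *: A) = conjc c *: adj A.
Proof. by apply/matrixP => i j; rewrite /adj !mxE conjcM. Qed.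
Lemma adj_opp p q (A : 'M[C]_(p, q)) : adj (- A) = - adj A.
Proof. by apply/matrixP => i j; rewrite /adj !mxE rmorphN. Qed.
Lemma adj_sum p q I (s : seq I) (P : pred I) (F : I -> 'M[C]_(p, q)) :
  adj (\sum_(i <- s | P i) F i) = \sum_(i <- s | P i) adj (F i).
Proof.
apply: (big_morph _ (@adj_add p q)).
by apply/matrixP => i j; rewrite /adj !mxE conjc0.
Qed.
Lemma adj_tstar p q (A : 'M[C]_(p, q)) : adj A = (A ^t* )%sesqui.
Proof. by apply/matrixP => i j; rewrite /adj !mxE. Qed.

End Basics.

Section States.
Variable R : realType.
Variable n : nat.
Local Notation C := R[i].
Local Notation Re := complex.Re.
Local Notation Im := complex.Im.
Local Notation M := 'M[C]_n.

Lemma energyDl (G1 G2 A : M) : energy (G1 + G2) A = energy G1 A + energy G2 A.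
Proof. by rewrite /energy mulmxDl raddfD /= cReD. Qed.
Lemma energyDr (G A B : M) : energy G (A + B) = energy G A + energy G B.
Proof. by rewrite /energy mulmxDr raddfD /= cReD. Qed.
Lemma energyNr (G A : M) : energy G (- A) = - energy G A.
Proof. by rewrite /energy mulmxN raddfN /= cReN. Qed.
Lemma energyNl (G A : M) : energy (- G) A = - energy G A.
Proof. by rewrite /energy mulNmx raddfN /= cReN. Qed.
Lemma energyZl (r : R) (G A : M) : energy (r%:C *: G) A = r * energy G A.
Proof. by rewrite /energy -scalemxAl linearZ /= cReMR. Qed.
Lemma energyZr (r : R) (G A : M) : energy G (r%:C *: A) = r * energy G A.
Proof. by rewrite /energy -scalemxAr linearZ /= cReMR. Qed.
Lemma energy0l (A : M) : energy 0 A = 0.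
Proof. by rewrite /energy mul0mx linear0. Qed.
Lemma energy0r (A : M) : energy A 0 = 0.
Proof. by rewrite /energy mulmx0 linear0. Qed.
Lemma energy_suml I (s : seq I) (P : pred I) (F : I -> M) (A : M) :
  energy (\sum_(i <- s | P i) F i) A = \sum_(i <- s | P i) energy (F i) A.
Proof. by apply: (big_morph _ (fun x y => energyDl x y A)); rewrite energy0l. Qed.
Lemma energy_sumr I (s : seq I) (P : pred I) (F : I -> M) (A : M) :
  energy A (\sum_(i <- s | P i) F i) = \sum_(i <- s | P i) energy A (F i).
Proof. by apply: (big_morph _ (fun x y => energyDr A x y)); rewrite energy0r. Qed.

Lemma mx11E (a b : 'M[C]_1) : (a *m b) 0 0 = a 0 0 * b 0 0.
Proof. by rewrite mxE big_ord1. Qed.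

Lemma energy_pure (x : 'cV[C]_n) (A : M) :
  energy (x *m adj x) A = Re ((adj x *m A *m x) 0 0).
Proof. by rewrite /energy -mulmxA mxtrace_mulC trace_mx11. Qed.

Lemma quad_adj (x y : 'cV[C]_n) : (adj y *m x) 0 0 = conjc ((adj x *m y) 0 0).
Proof. by rewrite -adj_entry adj_mul adj_inv. Qed.

Lemma herm0 : is_hermitian (0 : M).
Proof. by apply/matrixP => i j; rewrite /adj !mxE conjc0. Qed.
Lemma hermD (A B : M) : is_hermitian A -> is_hermitian B -> is_hermitian (A + B).
Proof. by rewrite /is_hermitian adj_add => -> ->. Qed.
Lemma hermZ (r : R) (A : M) : is_hermitian A -> is_hermitian (r%:C *: A).
Proof. by rewrite /is_hermitian adj_scale conjcR => ->. Qed.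
Lemma hermN (A : M) : is_hermitian A -> is_hermitian (- A).
Proof. by rewrite /is_hermitian adj_opp => ->. Qed.

Lemma psd0 : psd (0 : M).
Proof. by split; [exact: herm0| move=> x; rewrite mulmx0 mul0mx mxE]. Qed.
Lemma psdD (A B : M) : psd A -> psd B -> psd (A + B).
Proof.
move=> [hA pA] [hB pB]; split; first exact: hermD.
by move=> x; rewrite mulmxDr mulmxDl mxE addr_ge0.
Qed.
Lemma psdZ (r : R) (A : M) : 0 <= r -> psd A -> psd (r%:C *: A).
Proof.
move=> r0 [hA pA]; split; first exact: hermZ.
by move=> x; rewrite -scalemxAr -scalemxAl mxE mulr_ge0 // ler0c.
Qed.

Lemma psd_sum I (s : seq I) (P : pred I) (lam : I -> R) (F : I -> M) :
  (forall i, P i -> 0 <= lam i) -> (forall i, P i -> psd (F i)) ->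
  psd (\sum_(i <- s | P i) (lam i)%:C *: F i).
Proof.
move=> l0 pF; apply: (big_ind (@psd R n)); [exact: psd0 | exact: psdD |].
by move=> i Pi; apply: psdZ; [exact: l0 | exact: pF].
Qed.

Lemma tr_sum I (s : seq I) (P : pred I) (lam : I -> R) (F : I -> M) :
  (forall i, P i -> \tr (F i) = 1) ->
  \tr (\sum_(i <- s | P i) (lam i)%:C *: F i) = (\sum_(i <- s | P i) lam i)%:C.
Proof.
move=> tF; rewrite linear_sum rmorph_sum /=; apply: eq_bigr => i Pi.
by rewrite linearZ /= tF //; exact: mulr1.
Qed.

Lemma density_sum I (s : seq I) (P : pred I) (lam : I -> R) (F : I -> M) :
  (forall i, P i -> 0 <= lam i) -> (forall i, P i -> density (F i)) ->
  \sum_(i <- s | P i) lam i = 1 ->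
  density (\sum_(i <- s | P i) (lam i)%:C *: F i).
Proof.
move=> l0 dF s1; split.
  by apply: psd_sum => // i Pi; case: (dF i Pi).
by rewrite tr_sum ?s1 // => i Pi; case: (dF i Pi).
Qed.

Lemma pure_density (G : M) : pure_state G -> density G.
Proof.
move=> [x [x1 ->]]; split; last by rewrite mxtrace_mulC trace_mx11.
split; first by rewrite /is_hermitian adj_mul adj_inv.
move=> y; rewrite !mulmxA -(mulmxA (adj y *m x)) mx11E quad_adj mulrC.
exact: mulcJ_ge0.
Qed.

Lemma density_ReIm (G : M) (x : 'cV[C]_n) : density G ->
  Im ((adj x *m G *m x) 0 0) = 0 /\ 0 <= Re ((adj x *m G *m x) 0 0).
Proof. by move=> [[_ /(_ x)]]; rewrite cge0C => /andP[/eqP -> ->]. Qed.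

End States.

Section Spec.
Variable R : realType.
Variable n : nat.
Local Notation C := R[i].
Local Notation Re := complex.Re.
Local Notation Im := complex.Im.
Local Notation M := 'M[C]_n.

Lemma ex_argmin m (f : 'I_m -> R) (i0 : 'I_m) : exists k, forall j, f k <= f j.
Proof.
have := @order.Order.TotalTheory.arg_minP _ R _ i0 xpredT f isT.
by case=> k _ H; exists k => j; exact: H.
Qed.

Lemma herm_spectral (A : M) : is_hermitian A ->
  exists (P : M) (D : 'rV[C]_n),
    [/\ P *m adj P = 1%:M, adj P *m P = 1%:M & A = adj P *m diag_mx D *m P].
Proof.
move=> hA.
have nA : A \is normalmx.
  by apply/normalmxP; rewrite -adj_tstar hA.
move/orthomx_spectralP: nA => eA.
set P := spectralmx A in eA; set D := spectral_diag A in eA.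
have uP : P \is unitarymx by exact: spectral_unitarymx.
exists P, D; split.
- by rewrite adj_tstar; apply/unitarymxP.
- by rewrite adj_tstar -[X in X *m _ = _]mul1mx mulmxKtV.
- by rewrite adj_tstar -invmx_unitary.
Qed.

Lemma quad_diag (y : 'cV[C]_n) (D : 'rV[C]_n) :
  (adj y *m diag_mx D *m y) 0 0 = \sum_k conjc (y k 0) * D 0 k * y k 0.
Proof.
rewrite mul_mx_diag mxE; apply: eq_bigr => k _.
by rewrite /adj !mxE.
Qed.

Lemma Re_quad1 (z w : C) : Re (conjc z * w * z) = Re w * (Re z ^+ 2 + Im z ^+ 2).
Proof. case: z => a b; case: w => c e /=. ring. Qed.


Lemma complex_eta (x : C) : x = Re x +i* Im x. Proof. by case: x. Qed.

Lemma spec_entry (P : M) (D : 'rV[C]_n) i j :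
  (adj P *m diag_mx D *m P) i j = \sum_k conjc (P k i) * D 0 k * P k j.
Proof.
rewrite mul_mx_diag mxE; apply: eq_bigr => k _.
by rewrite /adj !mxE.
Qed.

Definition ucol (P : M) (k : 'I_n) : 'cV[C]_n := \col_i conjc (P k i).

Lemma ucol_quad (P X : M) k :
  (adj (ucol P k) *m X *m ucol P k) 0 0 = (P *m X *m adj P) k k.
Proof.
rewrite /adj !mxE; apply: eq_bigr => a _; rewrite !mxE; congr (_ * _).
by apply: eq_bigr => b _; rewrite !mxE conjcK.
Qed.

Lemma spec_conj (P : M) (D : 'rV[C]_n) :
  P *m adj P = 1%:M -> P *m (adj P *m diag_mx D *m P) *m adj P = diag_mx D.
Proof.
move=> PP1; rewrite !mulmxA PP1 mul1mx -mulmxA PP1 mulmx1 //.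
Qed.

Lemma density_decomp (G : M) : density G ->
  exists (d : 'I_n -> R) (u : 'I_n -> 'cV[C]_n),
    [/\ forall k, 0 <= d k, \sum_k d k = 1,
        forall k, (adj (u k) *m u k) 0 0 = 1 &
        G = \sum_k (d k)%:C *: (u k *m adj (u k))].
Proof.
move=> [[hG pG] tG]; have [P [D [PP1 P1 eG]]] := herm_spectral hG.
have Dk k : (adj (ucol P k) *m G *m ucol P k) 0 0 = D 0 k.
  by rewrite ucol_quad eG spec_conj // mxE eqxx mulr1n.
have uk k : (adj (ucol P k) *m ucol P k) 0 0 = 1.
  by have := ucol_quad P 1%:M k; rewrite !mulmx1 PP1 => ->; rewrite mxE eqxx.
have Dre k : D 0 k = (Re (D 0 k))%:C.
  have [] := density_ReIm (ucol P k) (conj (conj hG pG) tG).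
  by rewrite Dk => cIm0 _; rewrite [LHS]complex_eta cIm0.
have eG' : G = \sum_k (Re (D 0 k))%:C *: (ucol P k *m adj (ucol P k)).
  apply/matrixP => i j; rewrite eG spec_entry summxE; apply: eq_bigr => k _.
  rewrite !mxE big_ord1 !mxE -Dre conjcK; ring.
exists (fun k => Re (D 0 k)), (ucol P); split => //.
- move=> k; have [] := density_ReIm (ucol P k) (conj (conj hG pG) tG).
  by rewrite Dk.
- move: tG; rewrite eG' tr_sum => [/(congr1 (@complex.Re R)) //|k _].
  by rewrite mxtrace_mulC trace_mx11 uk.
Qed.


Lemma energy_pure_spec (P : M) (D : 'rV[C]_n) (x : 'cV[C]_n) :
  energy (x *m adj x) (adj P *m diag_mx D *m P) =
  \sum_k Re (D 0 k) * (Re ((P *m x) k 0) ^+ 2 + Im ((P *m x) k 0) ^+ 2).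
Proof.
rewrite energy_pure.
have -> : adj x *m (adj P *m diag_mx D *m P) *m x =
          adj (P *m x) *m diag_mx D *m (P *m x).
  by rewrite adj_mul !mulmxA.
rewrite quad_diag cRe_sum; apply: eq_bigr => k _; exact: Re_quad1.
Qed.

Lemma sumsq_unit (P : M) (x : 'cV[C]_n) : adj P *m P = 1%:M ->
  \sum_k (Re ((P *m x) k 0) ^+ 2 + Im ((P *m x) k 0) ^+ 2) =
  Re ((adj x *m x) 0 0).
Proof.
move=> P1.
have -> : adj x *m x = adj (P *m x) *m (P *m x).
  by rewrite adj_mul mulmxA -(mulmxA (adj x)) P1 mulmx1.
rewrite mxE cRe_sum; apply: eq_bigr => k _.
rewrite adj_entry; set z := ((P *m x) k 0).
by case: z => a b /=; ring.
Qed.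

Lemma ground_exists (H : M) : (0 < n)%N -> is_hermitian H ->
  exists G, ground_pure H G.
Proof.
move=> n0 hH; have [P [D [PP1 P1 eH]]] := herm_spectral hH.
have [k0 k0min] := ex_argmin (fun k => Re (D 0 k)) (Ordinal n0).
exists (ucol P k0 *m adj (ucol P k0)).
have uk k : (adj (ucol P k) *m ucol P k) 0 0 = 1.
  by have := ucol_quad P 1%:M k; rewrite !mulmx1 PP1 => ->; rewrite mxE eqxx.
split; first by exists (ucol P k0).
move=> G' [x [x1 ->]].
rewrite energy_pure ucol_quad eH spec_conj // mxE eqxx mulr1n.
rewrite energy_pure_spec.
apply: (@le_trans _ _ (\sum_k Re (D 0 k0) *
     (Re ((P *m x) k 0) ^+ 2 + Im ((P *m x) k 0) ^+ 2))).
  by rewrite -mulr_sumr sumsq_unit // x1 mulr1.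
apply: ler_sum => k _; apply: ler_wpM2r; last exact: k0min.
by rewrite addr_ge0 // sqr_ge0.
Qed.

Lemma density_ge_ground (H G0 G : M) : ground_pure H G0 -> density G ->
  energy G0 H <= energy G H.
Proof.
move=> [_ g0] dG; have [d [u [d0 d1 u1 ->]]] := density_decomp dG.
rewrite energy_suml.
apply: (@le_trans _ _ (\sum_k d k * energy G0 H)).
  by rewrite -mulr_suml d1 mul1r.
apply: ler_sum => k _; rewrite energyZl; apply: ler_wpM2l => //.
by apply: g0; exists (u k).
Qed.

End Spec.

Section Func.
Variable R : realType.
Variables n d : nat.
Local Notation C := R[i].
Local Notation Re := complex.Re.
Local Notation Im := complex.Im.
Local Notation M := 'M[C]_n.
Variable iota : 'rV[R]_d -> M.
Variable W : M.
Hypothesis iota_lin : forall (a : R) (u v : 'rV[R]_d),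
      iota (a *: u + v) = (a%:C) *: iota u + iota v.
Hypothesis iota_herm : forall v, is_hermitian (iota v).
Hypothesis W_herm : is_hermitian W.

Lemma iota0 : iota 0 = 0.
Proof.
have h := iota_lin 1 0 0; rewrite scaler0 add0r rmorph1 scale1r in h.
have : iota 0 + iota 0 - iota 0 = iota 0 - iota 0 by rewrite -h.
by rewrite addrK subrr.
Qed.
Lemma iotaD u v : iota (u + v) = iota u + iota v.
Proof. by have := iota_lin 1 u v; rewrite scale1r rmorph1 scale1r. Qed.
Lemma iotaZ a u : iota (a *: u) = a%:C *: iota u.
Proof. by have := iota_lin a u 0; rewrite !addr0 iota0 addr0. Qed.
Lemma iotaN u : iota (- u) = - iota u.
Proof. by rewrite -scaleN1r iotaZ rmorphN1 scaleN1r. Qed.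
Lemma iota_sum I (s : seq I) (P : pred I) (F : I -> 'rV[R]_d) :
  iota (\sum_(i <- s | P i) F i) = \sum_(i <- s | P i) iota (F i).
Proof. exact: (big_morph _ iotaD iota0). Qed.

Lemma pairing_istar G v : pairing (istar iota G) v = energy G (iota v).
Proof.
rewrite {2}(row_sum_delta v) iota_sum energy_sumr /pairing.
by apply: eq_bigr => k _; rewrite iotaZ energyZr mxE mulrC.
Qed.

Definition Sup (P : M -> Prop) (v : 'rV[R]_d) : \bar R :=
  ereal_sup [set (energy G (iota v - W))%:E | G in P].

Lemma conj_formula (Q : M -> 'rV[R]_d -> Prop) (P : M -> Prop)
    (g : 'rV[R]_d -> \bar R) :
  (forall G rho, Q G rho <-> P G /\ istar iota G = rho) ->
  (forall rho, g rho = ereal_inf [set (energy G W)%:E | G in [set G | Q G rho]]) ->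
  forall v, conjugate g v = Sup P v.
Proof.
move=> hQ hg v; apply/eqP; rewrite eq_le; apply/andP; split.
  apply: ge_ereal_sup => _ [rho _ <-].
  case Sv : (Sup P v) => [s| |]; last 2 first.
  - by rewrite leey.
  - have gE : g rho = +oo%E.
      rewrite hg; apply/ereal_inf_pinfty => _ [G /hQ [PG _] <-].
      have : ((energy G (iota v - W))%:E <= Sup P v)%E.
        by apply: ereal_sup_ubound; exists G.
      by rewrite Sv.
    by rewrite gE.
  have lb : ((pairing rho v - s)%:E <= g rho)%E.
    rewrite hg; apply: le_ereal_inf_tmp => _ [G /hQ [PG <-] <-].
    have : ((energy G (iota v - W))%:E <= Sup P v)%E.
      by apply: ereal_sup_ubound; exists G.
    rewrite Sv lee_fin pairing_istar energyDr energyNr lee_fin; lra.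
  move: lb; case: (g rho) => [r| |] /= lbr.
  - by move: lbr; rewrite !lee_fin; lra.
  - exact: leNye.
  - by move: lbr; rewrite leeNy_eq.
apply: ge_ereal_sup => _ [G PG <-].
apply: le_ereal_sup_tmp; exists ((pairing (istar iota G) v)%:E - g (istar iota G))%E.
  by exists (istar iota G).
have : (g (istar iota G) <= (energy G W)%:E)%E.
  by rewrite hg; apply: ereal_inf_lbound; exists G => //; apply/hQ.
rewrite pairing_istar energyDr energyNr.
case: (g (istar iota G)) => [r| |] /= lbr.
- by move: lbr; rewrite !lee_fin; lra.
- by move: lbr; rewrite leye_eq.
- exact: leey.
Qed.

Definition HKstate (G : M) := exists u, ground_pure (iota u + W) G.

Lemma conj_Fe v : conjugate (F_e iota W) v = Sup (@density R n) v.
Proof. by apply: (@conj_formula (fun G rho => density G /\ istar iota G = rho)). Qed.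
Lemma conj_Fp v : conjugate (F_p iota W) v = Sup (@pure_state R n) v.
Proof. by apply: (@conj_formula (fun G rho => pure_state G /\ istar iota G = rho)). Qed.
Lemma conj_FHK v : conjugate (F_HK iota W) v = Sup HKstate v.
Proof.
apply: (@conj_formula (fun G rho => exists u, ground_pure (iota u + W) G /\ istar iota G = rho)) => //.
move=> G rho; split; first by move=> [u [gu <-]]; split => //; exists u.
by move=> [[u gu] <-]; exists u.
Qed.

Lemma density_n0 G : @density R n G -> (0 < n)%N.
Proof.
case: n G => // G [_]; rewrite /mxtrace big_ord0 => /eqP.
by rewrite eq_sym oner_eq0.
Qed.

Lemma Sup_eq : Sup HKstate =1 Sup (@density R n) /\ Sup (@pure_state R n) =1 Sup (@density R n).
Proof.
have HKp : HKstate `<=` @pure_state R n by move=> G [u [pG _]].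
have pd : @pure_state R n `<=` @density R n by move=> G /pure_density.
have dHK v : (Sup (@density R n) v <= Sup HKstate v)%E.
  apply: ge_ereal_sup => _ [G dG <-].
  have hH : is_hermitian (iota (- v) + W) by apply: hermD.
  have [G0 g0] := ground_exists (density_n0 dG) hH.
  apply: le_ereal_sup_tmp; exists (energy G0 (iota v - W))%:E.
    by exists G0 => //; exists (- v).
  have := density_ge_ground g0 dG.
  rewrite !lee_fin !energyDr !energyNr iotaN !energyNr; lra.
have Hp v : (Sup HKstate v <= Sup (@pure_state R n) v)%E.
  by apply: ereal_sup_le; apply: image_subset.
have pD v : (Sup (@pure_state R n) v <= Sup (@density R n) v)%E.
  by apply: ereal_sup_le; apply: image_subset.
split => v; apply/eqP; rewrite eq_le.
  by rewrite dHK andbT (le_trans (Hp v) (pD v)).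
by rewrite pD (le_trans (dHK v) (Hp v)).
Qed.

End Func.

Section Cont.
Variable R : realType.
Variable T : topologicalType.
Local Notation C := R[i].
Local Notation Re := complex.Re.
Local Notation Im := complex.Im.

Lemma cD (f g : T -> R) : continuous f -> continuous g -> continuous (fun t => f t + g t).
Proof. move=> cf cg t; exact: (continuousD (cf t) (cg t)). Qed.
Lemma cM (f g : T -> R) : continuous f -> continuous g -> continuous (fun t => f t * g t).
Proof. move=> cf cg t; exact: (continuousM (cf t) (cg t)). Qed.
Lemma cN (f : T -> R) : continuous f -> continuous (fun t => - f t).
Proof. move=> cf t; exact: (continuousN (cf t)). Qed.
Lemma cC (c : R) : continuous (fun t : T => c).
Proof. exact: cst_continuous. Qed.
Lemma cmax (f : T -> R) : continuous f -> continuous (fun t => Num.max (f t) 0).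
Proof. move=> cf t; apply: continuous_max; first exact: cf. exact: (@cst_continuous T _ 0 t). Qed.
Lemma csum I (s : seq I) (P : pred I) (F : I -> T -> R) :
  (forall i, continuous (F i)) -> continuous (fun t => \sum_(i <- s | P i) F i t).
Proof.
move=> cF; elim: s => [|a s IH].
  have -> : (fun t => \sum_(i <- [::] | P i) F i t) = (fun=> 0).
    by apply: funext => t; rewrite big_nil.
  exact: cC.
have -> : (fun t => \sum_(i <- a :: s | P i) F i t) =
  (fun t => (if P a then F a t else 0) + \sum_(i <- s | P i) F i t).
  by apply: funext => t; rewrite big_cons; case: (P a); rewrite ?add0r.
apply: cD => //; case: (P a) => //; exact: cC.
Qed.

Definition ccont (f : T -> C) :=
  continuous (fun t => Re (f t)) /\ continuous (fun t => Im (f t)).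

Lemma ccD f g : ccont f -> ccont g -> ccont (fun t => f t + g t).
Proof.
move=> [f1 f2] [g1 g2]; split.
  have -> : (fun t => Re (f t + g t)) = (fun t => Re (f t) + Re (g t)).
    by apply: funext => t; rewrite cReD.
  exact: cD.
have -> : (fun t => Im (f t + g t)) = (fun t => Im (f t) + Im (g t)).
  by apply: funext => t; rewrite cImD.
exact: cD.
Qed.
Lemma ccM f g : ccont f -> ccont g -> ccont (fun t => f t * g t).
Proof.
move=> [f1 f2] [g1 g2]; split.
  have -> : (fun t => Re (f t * g t)) =
     (fun t => Re (f t) * Re (g t) + - (Im (f t) * Im (g t))).
    by apply: funext => t; rewrite cReM.
  by apply: cD; [exact: cM | apply: cN; exact: cM].
have -> : (fun t => Im (f t * g t)) =
   (fun t => Re (f t) * Im (g t) + Im (f t) * Re (g t)).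
  by apply: funext => t; rewrite cImM.
by apply: cD; exact: cM.
Qed.
Lemma ccJ f : ccont f -> ccont (fun t => conjc (f t)).
Proof.
move=> [f1 f2]; split.
  have -> : (fun t => Re (conjc (f t))) = (fun t => Re (f t)).
    by apply: funext => t; rewrite cReJ.
  exact: f1.
have -> : (fun t => Im (conjc (f t))) = (fun t => - Im (f t)).
  by apply: funext => t; rewrite cImJ.
exact: cN.
Qed.
Lemma ccC (c : C) : ccont (fun=> c).
Proof. by split; exact: cC. Qed.
Lemma ccR (h : T -> R) : continuous h -> ccont (fun t => (h t)%:C).
Proof. by move=> ch; split => //=; exact: cC. Qed.
Lemma ccRI (h1 h2 : T -> R) : continuous h1 -> continuous h2 ->
  ccont (fun t => h1 t +i* h2 t).
Proof. by move=> c1 c2; split. Qed.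
Lemma ccsum I (s : seq I) (P : pred I) (F : I -> T -> C) :
  (forall i, ccont (F i)) -> ccont (fun t => \sum_(i <- s | P i) F i t).
Proof.
move=> cF; split.
  have -> : (fun t => Re (\sum_(i <- s | P i) F i t)) =
     (fun t => \sum_(i <- s | P i) Re (F i t)).
    by apply: funext => t; rewrite cRe_sum.
  by apply: csum => i; case: (cF i).
have -> : (fun t => Im (\sum_(i <- s | P i) F i t)) =
   (fun t => \sum_(i <- s | P i) Im (F i t)).
  by apply: funext => t; rewrite cIm_sum.
by apply: csum => i; case: (cF i).
Qed.

End Cont.

Section Param.
Variable R : realType.
Variable n : nat.
Local Notation C := R[i].
Local Notation Re := complex.Re.
Local Notation Im := complex.Im.
Local Notation N := (n + n * (n + n))%N.
Local Notation T := 'rV[R]_N.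

Definition lamp (t : T) (k : 'I_n) : R := t 0 (lshift (n * (n + n)) k).
Definition xre (t : T) k i : R := t 0 (rshift n (mxvec_index k (lshift n i))).
Definition xim (t : T) k i : R := t 0 (rshift n (mxvec_index k (rshift n i))).
Definition xv (t : T) k : 'cV[C]_n := \col_i (xre t k i +i* xim t k i).
Definition phi (t : T) : 'M[C]_n := \sum_k (lamp t k)%:C *: (xv t k *m adj (xv t k)).
Definition sqn (t : T) k := \sum_i (xre t k i ^+ 2 + xim t k i ^+ 2).
Definition Kset : set T :=
  (\bigcap_(k in [set: 'I_n]) ((fun t => lamp t k) @^-1` [set x | 0 <= x]))
  `&` ((fun t => \sum_k lamp t k) @^-1` [set x | x = 1])
  `&` (\bigcap_(k in [set: 'I_n]) ((fun t => sqn t k) @^-1` [set x | x = 1])).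

Lemma conjc_mul_self (z : C) : conjc z * z = (Re z ^+ 2 + Im z ^+ 2)%:C.
Proof.
case: z => a b; apply/eqP; rewrite eq_complex /=; apply/andP; split; apply/eqP; ring.
Qed.

Lemma unit_sqn t k : (adj (xv t k) *m xv t k) 0 0 = (sqn t k)%:C.
Proof.
rewrite mxE rmorph_sum; apply: eq_bigr => i _.
by rewrite adj_entry conjc_mul_self !mxE.
Qed.

Lemma K_density t : Kset t -> density (phi t).
Proof.
move=> [[l0 l1] s1]; apply: density_sum => //.
- by move=> k _; exact: (l0 k).
- move=> k _; apply: pure_density; exists (xv t k); split => //.
  by rewrite unit_sqn (s1 k).
Qed.

Lemma density_K (G : 'M[C]_n) : density G -> exists2 t, Kset t & phi t = G.
Proof.
move=> dG; have [d [u [d0 d1 u1 eG]]] := density_decomp dG.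
pose U : 'M[R]_(n, n + n) :=
  row_mx (\matrix_(k, i) Re (u k i 0)) (\matrix_(k, i) Im (u k i 0)).
pose t : T := row_mx (\row_k d k) (mxvec U).
have lt k : lamp t k = d k by rewrite /lamp row_mxEl mxE.
have xvt k : xv t k = u k.
  apply/matrixP => i j; rewrite (ord1 j) !mxE /xre /xim !row_mxEr !mxvecE.
  by rewrite row_mxEl row_mxEr !mxE -complex_eta.
have st k : sqn t k = 1.
  by have := unit_sqn t k; rewrite xvt u1 => /(congr1 (@complex.Re R)).
exists t; last first.
  by rewrite eG /phi; apply: eq_bigr => k _; rewrite lt xvt.
split; [split|].
- by move=> k _; rewrite /= lt.
- by rewrite /= -d1; apply: eq_bigr => k _; rewrite lt.
- by move=> k _; rewrite /= st.
Qed.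


Lemma coordc (j : 'I_N) : continuous (fun t : T => t 0 j).
Proof. exact: (@coord_continuous R 1 N 0 j). Qed.

Lemma cont_lamp k : continuous (fun t => lamp t k).
Proof. exact: coordc. Qed.
Lemma cont_sqn k : continuous (fun t => sqn t k).
Proof.
apply: csum => i; apply: cD.
  have -> : (fun t => xre t k i ^+ 2) = (fun t => xre t k i * xre t k i).
    by apply: funext => t; rewrite expr2.
  by apply: cM; exact: coordc.
have -> : (fun t => xim t k i ^+ 2) = (fun t => xim t k i * xim t k i).
  by apply: funext => t; rewrite expr2.
by apply: cM; exact: coordc.
Qed.

Lemma closed_pre_ge (f : T -> R) : continuous f -> closed (f @^-1` [set x | 0 <= x]).
Proof. move=> cf; have h := (continuous_closedP f).1 cf; apply: h; exact: closed_ge. Qed.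
Lemma closed_pre_eq (f : T -> R) : continuous f -> closed (f @^-1` [set x | x = 1]).
Proof. move=> cf; have h := (continuous_closedP f).1 cf; apply: h; exact: closed_eq. Qed.

Lemma closed_K : closed Kset.
Proof.
apply: closedI; first apply: closedI.
- apply: closed_bigI => k _.
  exact: closed_pre_ge (@cont_lamp k).
- by apply: closed_pre_eq; apply: csum => k; exact: cont_lamp.
- apply: closed_bigI => k _.
  exact: closed_pre_eq (@cont_sqn k).
Qed.

Lemma K_entry t j : Kset t -> `|t 0 j| <= 1.
Proof.
move=> [[l0 l1] s1]; rewrite ler_norml.
case: (split_ordP j) => [k ->|m ->].
  have lk : 0 <= lamp t k := l0 k I.
  have : lamp t k <= \sum_k lamp t k.
    rewrite (bigD1 k) //= lerDl; apply: sumr_ge0 => i _; exact: (l0 i I).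
  rewrite l1 /lamp => h; apply/andP; split => //.
  by rewrite (le_trans _ lk) // lerN10.
case: (mxvec_indexP m) => k c.
have sk : sqn t k = 1 := s1 k I.
have bnd i : xre t k i ^+ 2 + xim t k i ^+ 2 <= 1.
  rewrite -sk /sqn (bigD1 i) //= lerDl; apply: sumr_ge0 => i' _.
  by rewrite addr_ge0 // sqr_ge0.
case: (split_ordP c) => [i ->|i ->].
  have := bnd i; rewrite /xre => h.
  have h2 : 0 <= xim t k i ^+ 2 := sqr_ge0 _.
  move: h h2; rewrite /xim; set a := t 0 _; set b := t 0 _ => h h2.
  apply/andP; split; nra.
have := bnd i; rewrite /xim => h.
have h2 : 0 <= xre t k i ^+ 2 := sqr_ge0 _.
move: h h2; rewrite /xre; set a := t 0 _; set b := t 0 _ => h h2.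
apply/andP; split; nra.
Qed.

Lemma compact_K : compact Kset.
Proof.
apply: bounded_closed_compact; last exact: closed_K.
exists 1; split; first exact: num_real.
move=> M M1 t Kt; change (mx_norm t <= M); rewrite mx_normrE.
apply: bigmax_le => [|[a j] _ /=]; first by rewrite (le_trans _ (ltW M1)).
by rewrite (ord1 a) (le_trans (K_entry j Kt)) // ltW.
Qed.

Lemma phi_entry t i j :
  phi t i j = \sum_k (lamp t k)%:C * (xv t k i 0 * conjc (xv t k j 0)).
Proof.
rewrite /phi summxE; apply: eq_bigr => k _.
rewrite /adj !mxE big_ord1 /xv; congr (_ * (_ * _)); rewrite !mxE //.
Qed.

Lemma cc_xv k i : ccont (fun t : T => xv t k i 0).
Proof.
have -> : (fun t : T => xv t k i 0) = (fun t => xre t k i +i* xim t k i).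
  by apply: funext => t; rewrite mxE.
by apply: ccRI; exact: coordc.
Qed.

Lemma cc_phi i j : ccont (fun t => phi t i j).
Proof.
have -> : (fun t => phi t i j) =
   (fun t => \sum_k (lamp t k)%:C * (xv t k i 0 * conjc (xv t k j 0))).
  by apply: funext => t; rewrite phi_entry.
apply: ccsum => k; apply: ccM; first by apply: ccR; exact: cont_lamp.
by apply: ccM; [exact: cc_xv | apply: ccJ; exact: cc_xv].
Qed.

Lemma cont_energy (A : 'M[C]_n) : continuous (fun t => energy (phi t) A).
Proof.
have -> : (fun t => energy (phi t) A) =
   (fun t => Re (\sum_i \sum_j phi t i j * A j i)).
  by apply: funext => t; rewrite /energy /mxtrace; congr Re; apply: eq_bigr => i _; rewrite mxE.
suff [] : ccont (fun t => \sum_i \sum_j phi t i j * A j i) by [].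
apply: ccsum => i; apply: ccsum => j; apply: ccM; [exact: cc_phi | exact: ccC].
Qed.

Lemma density_min (F : T -> R) (Fm : 'M[C]_n -> R) :
  continuous F -> (forall t, Kset t -> F t = Fm (phi t)) ->
  (exists G : 'M[C]_n, density G) ->
  exists G0 : 'M[C]_n, density G0 /\ forall G, density G -> Fm G0 <= Fm G.
Proof.
move=> cF FE [G dG].
have [t0 Kt0 _] := density_K dG.
have [t1 Kt1 t1min] := compact_EVT_min (ex_intro _ t0 Kt0) compact_K
  (continuous_subspaceT cF).
have Kt1' : Kset t1 by move: Kt1; rewrite inE.
exists (phi t1); split; first exact: K_density.
move=> G' dG'; have [t Kt <-] := density_K dG'.
rewrite -!FE //; apply: t1min; rewrite inE; exact: Kt.
Qed.

End Param.

Section Pairing.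
Variable R : realType.
Variable d : nat.
Implicit Types x y z : 'rV[R]_d.

Lemma pairingC x y : pairing x y = pairing y x.
Proof. by apply: eq_bigr => k _; rewrite mulrC. Qed.
Lemma pairingDl x y z : pairing (x + y) z = pairing x z + pairing y z.
Proof. by rewrite /pairing -big_split; apply: eq_bigr => k _; rewrite mxE mulrDl. Qed.
Lemma pairingZl c x z : pairing (c *: x) z = c * pairing x z.
Proof. by rewrite /pairing mulr_sumr; apply: eq_bigr => k _; rewrite mxE mulrA. Qed.
Lemma pairingNl x z : pairing (- x) z = - pairing x z.
Proof. by rewrite -scaleN1r pairingZl mulN1r. Qed.
Lemma pairingBl x y z : pairing (x - y) z = pairing x z - pairing y z.
Proof. by rewrite pairingDl pairingNl. Qed.
Lemma pairingZr c x z : pairing x (c *: z) = c * pairing x z.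
Proof. by rewrite pairingC pairingZl pairingC. Qed.
Lemma pairingNr x z : pairing x (- z) = - pairing x z.
Proof. by rewrite pairingC pairingNl pairingC. Qed.
Lemma pairing_ge0 x : 0 <= pairing x x.
Proof. by apply: sumr_ge0 => k _; rewrite -expr2 sqr_ge0. Qed.
Lemma pairing_eq0 x : pairing x x = 0 -> x = 0.
Proof.
move=> h; apply/rowP => k; rewrite mxE.
have := psumr_eq0P (P := xpredT) (F := fun k => x 0 k * x 0 k) _ h (i := k).
move=> /(_ (fun i _ => ltac:(rewrite -expr2; exact: sqr_ge0)) isT).
by move/eqP; rewrite mulf_eq0 orbb => /eqP.
Qed.

Lemma pairing_expand x y (s : R) :
  pairing (x + s *: y) (x + s *: y) =
  pairing x x + 2 * s * pairing x y + s ^+ 2 * pairing y y.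
Proof.
rewrite /pairing !mulr_sumr -!big_split /=; apply: eq_bigr => k _.
rewrite !mxE; ring.
Qed.

End Pairing.

Lemma quad_limit (R : realType) (L K : R) : 0 <= K ->
  (forall s, 0 < s -> s <= 1 -> 0 <= 2 * L + s * K) -> 0 <= L.
Proof.
move=> K0 h; rewrite leNgt; apply/negP => L0.
have D0 : 0 < K - L by lra.
pose s := - L / (K - L).
have sD : s * (K - L) = - L by rewrite /s divfK // gt_eqF.
have s0 : 0 < s by rewrite /s divr_gt0 // oppr_gt0.
have s1 : s <= 1 by rewrite /s ler_pdivrMr // mul1r; lra.
have := h s s0 s1; nra.
Qed.

Lemma max_sq_le (R : realType) (e y t : R) : e <= y ->
  (Num.max (e - t) 0) ^+ 2 <= (y - t) ^+ 2.
Proof.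
move=> ey; have [h|h] := leP (e - t) 0.
  by rewrite expr0n /= sqr_ge0.
rewrite ler_sqr ?nnegrE; lra.
Qed.

Section Sep.
Variable R : realType.
Variables n d : nat.
Local Notation C := R[i].
Local Notation M := 'M[C]_n.
Variable iota : 'rV[R]_d -> M.
Variable W : M.

Lemma istarD (G1 G2 : M) : istar iota (G1 + G2) = istar iota G1 + istar iota G2.
Proof. by apply/rowP => k; rewrite !mxE energyDl. Qed.
Lemma istarZ (r : R) (G : M) : istar iota (r%:C *: G) = r *: istar iota G.
Proof. by apply/rowP => k; rewrite !mxE energyZl. Qed.

Lemma density_conv (A B : M) (s : R) : density A -> density B -> 0 <= s <= 1 ->
  density ((1 - s)%:C *: A + s%:C *: B).
Proof.
move=> [pA tA] [pB tB] /andP[s0 s1]; split.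
  by apply: psdD; apply: psdZ => //; lra.
by rewrite raddfD /= !linearZ /= tA tB !mulr1 -rmorphD subrK rmorph1.
Qed.

Variables (rho : 'rV[R]_d) (t : R).

Definition av (G : M) := istar iota G - rho.
Definition gf (G : M) := pairing (av G) (av G) + (Num.max (energy G W - t) 0) ^+ 2.

Lemma cont_gf : continuous (fun tau => gf (@phi R n tau)).
Proof.
have -> : (fun tau => gf (phi tau)) = (fun tau =>
   \sum_k ((energy (phi tau) (iota (delta_mx 0 k)) - rho 0 k) *
           (energy (phi tau) (iota (delta_mx 0 k)) - rho 0 k)) +
   Num.max (energy (phi tau) W - t) 0 * Num.max (energy (phi tau) W - t) 0).
  apply: funext => tau; rewrite /gf expr2; congr (_ + _).
  by apply: eq_bigr => k _; rewrite !mxE.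
apply: cD.
  apply: csum => k; apply: cM; apply: cD; (try exact: cont_energy); exact: cC.
apply: cM; apply: cmax; apply: cD; (try exact: cont_energy); exact: cC.
Qed.


Lemma separation :
  (forall G : M, density G -> istar iota G = rho -> t < energy G W) ->
  exists v c, t < c /\ forall G : M, density G ->
    c <= pairing rho v - pairing (istar iota G) v + energy G W.
Proof.
move=> hyp.
case: (pselect (exists G : M, density G)) => [exG|noG]; last first.
  exists 0, (t + 1); split; first lra.
  by move=> G dG; exfalso; apply: noG; exists G.
have [G0 [dG0 G0min]] := @density_min R n (fun tau => gf (phi tau)) gf
  cont_gf (fun _ _ => erefl) exG.
have [Gw [dGw Gwmin]] := @density_min R n (fun tau => energy (phi tau) W)
  (fun G => energy G W) (@cont_energy R n W) (fun _ _ => erefl) exG.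
set a0 := av G0; set e0 := energy G0 W; set b := Num.max (e0 - t) 0.
have b0 : 0 <= b by rewrite le_max lexx orbT.
have be : e0 - t <= b by rewrite le_max lexx.
have key G : density G ->
    pairing a0 a0 + b * (t + b) <= pairing a0 (av G) + b * energy G W.
  move=> dG.
  set Dv := av G - a0.
  set X := energy G W - (t + b).
  suff : 0 <= pairing a0 Dv + b * X.
    rewrite /Dv /X pairingC pairingBl (pairingC (av G)); lra.
  apply: (@quad_limit _ _ (pairing Dv Dv + X ^+ 2)).
    by rewrite addr_ge0 // ?pairing_ge0 ?sqr_ge0.
  move=> s s0 s1.
  set Gs := (1 - s)%:C *: G0 + s%:C *: G.
  have dGs : density Gs by apply: density_conv => //; rewrite (ltW s0) s1.
  have avs : av Gs = a0 + s *: Dv.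
    rewrite /av /Gs istarD !istarZ /Dv /a0 /av.
    by apply/rowP => k; rewrite !mxE; ring.
  have es : energy Gs W = e0 + s * (energy G W - e0).
    by rewrite /Gs energyDl !energyZl /e0; ring.
  have hmin := G0min Gs dGs.
  have hmax : (Num.max (energy Gs W - t) 0) ^+ 2 <= (t + b + s * X - t) ^+ 2.
    apply: max_sq_le; rewrite es /X; nra.
  move: hmin; rewrite /gf avs pairing_expand -/a0 -/e0 -/b.
  move=> hmin.
  have h2 : 0 <= s * (2 * (pairing a0 Dv + b * X) + s * (pairing Dv Dv + X ^+ 2)).
    move: hmax hmin; set P := pairing a0 Dv; set Q := pairing Dv Dv.
    set m := Num.max (energy Gs W - t) 0 => hmax hmin.
    have e1 : t + b + s * X - t = b + s * X by ring.
    rewrite e1 in hmax.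
    nra.
  by move: h2; rewrite pmulr_rge0.
have [bpos|bz] : 0 < b \/ b = 0.
  by move: b0; rewrite le_eqVlt => /orP[/eqP ->|->]; [right|left].
  exists (- b^-1 *: a0), (t + b); split; first lra.
  move=> G dG; have := key G dG.
  rewrite !pairingZr ?pairingNr.
  have -> : pairing rho a0 = pairing (istar iota G) a0 - pairing (av G) a0.
    by rewrite /av pairingBl; ring.
  rewrite (pairingC (av G)).
  have ib : b^-1 * b = 1 by rewrite mulVf // gt_eqF.
  have ib0 : 0 < b^-1 by rewrite invr_gt0.
  move=> hk; have h1 := ler_wpM2l (ltW ib0) hk.
  rewrite !mulrDr !mulrA ib !mul1r in h1.
  have h2 : 0 <= b^-1 * pairing a0 a0 by rewrite mulr_ge0 // ?pairing_ge0 ?ltW.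
  lra.
have m0 : 0 < pairing a0 a0.
  rewrite lt_def pairing_ge0 andbT; apply/negP => /eqP /pairing_eq0 a00.
  have : istar iota G0 = rho by apply/eqP; rewrite -subr_eq0; apply/eqP.
  move=> /(hyp G0 dG0) te.
  have : 0 < b by rewrite lt_max; apply/orP; left; rewrite subr_gt0.
  by rewrite bz ltxx.
pose K := (`|t + 1 - energy Gw W| + 1) / pairing a0 a0.
have K0 : 0 <= K by rewrite /K divr_ge0 // ?ltW // addr_ge0.
have Km : K * pairing a0 a0 = `|t + 1 - energy Gw W| + 1.
  by rewrite /K divfK // gt_eqF.
exists (- K *: a0), (t + 1); split; first lra.
move=> G dG; have := key G dG; rewrite bz !mul0r !addr0.
rewrite !pairingZr ?pairingNr.
have -> : pairing rho a0 = pairing (istar iota G) a0 - pairing (av G) a0.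
  by rewrite /av pairingBl; ring.
rewrite (pairingC (av G)) => hk.
have hw := Gwmin G dG.
have hab := ler_norm (t + 1 - energy Gw W).
nra.
Qed.

End Sep.

Lemma ereal_le_from_fin (R : realType) (x y : \bar R) :
  (forall r : R, (r%:E < x)%E -> (r%:E <= y)%E) -> (x <= y)%E.
Proof.
case: x => [r| |] h; last exact: leNye.
- case: y h => [s| |] h; last 2 first.
  + exact: leey.
  + by have := h (r - 1); rewrite lte_fin leeNy_eq; move/(_ ltac:(lra)).
  rewrite lee_fin leNgt; apply/negP => sr.
  have := h ((r + s) / 2); rewrite lte_fin lee_fin.
  move=> /(_ ltac:(lra)); lra.
- case: y h => [s| |] h; last 2 first.
  + exact: leey.
  + by have := h 0%R; rewrite ltey => /(_ isT); rewrite leeNy_eq.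
  have := h (s + 1)%R; rewrite ltey => /(_ isT); rewrite lee_fin => h'.
  exfalso; lra.
Qed.

Section Final.
Variable R : realType.
Variables n d : nat.
Local Notation C := R[i].
Local Notation M := 'M[C]_n.
Variable iota : 'rV[R]_d -> M.
Variable W : M.
Hypothesis iota_lin : forall (a : R) (u v : 'rV[R]_d),
      iota (a *: u + v) = (a%:C) *: iota u + iota v.
Hypothesis iota_herm : forall v, is_hermitian (iota v).
Hypothesis W_herm : is_hermitian W.

Lemma biconj_congr (g1 g2 : 'rV[R]_d -> \bar R) :
  conjugate g1 = conjugate g2 -> biconjugate g1 = biconjugate g2.
Proof. by rewrite /biconjugate => ->. Qed.

Lemma biconj_Fe : biconjugate (F_e iota W) = F_e iota W.
Proof.
apply: funext => rho.
have hc : conjugate (F_e iota W) = Sup iota W (@density R n).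
  by apply: funext => v; rewrite (conj_Fe W iota_lin).
rewrite /biconjugate hc.
apply/eqP; rewrite eq_le; apply/andP; split.
  apply: ge_ereal_sup => _ [v _ <-].
  rewrite /F_e; apply: le_ereal_inf_tmp => _ [G [dG eG] <-].
  have : ((energy G (iota v - W))%:E <= Sup iota W (@density R n) v)%E.
    by apply: ereal_sup_ubound; exists G.
  rewrite energyDr energyNr -(pairing_istar iota_lin) eG.
  case: (Sup iota W (@density R n) v) => [s| |] /= h.
  - by move: h; rewrite !lee_fin; lra.
  - exact: leNye.
  - by move: h; rewrite leeNy_eq.
apply: ereal_le_from_fin => r hr.
have hyp : forall G : M, density G -> istar iota G = rho -> r < energy G W.
  move=> G dG eG.
  have h : (F_e iota W rho <= (energy G W)%:E)%E.
    by apply: ereal_inf_lbound; exists G.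
  by rewrite -lte_fin; exact: lt_le_trans hr h.
have [v [c [rc hcG]]] := separation hyp.
have hs : (Sup iota W (@density R n) v <= (pairing rho v - c)%:E)%E.
  apply: ge_ereal_sup => _ [G dG <-].
  rewrite lee_fin energyDr energyNr -(pairing_istar iota_lin).
  have := hcG G dG; lra.
apply: le_ereal_sup_tmp; exists ((pairing rho v)%:E - Sup iota W (@density R n) v)%E.
  by exists v.
move: hs; case: (Sup iota W (@density R n) v) => [s| |] /= hs.
- by move: hs; rewrite !lee_fin; lra.
- by move: hs; rewrite leye_eq.
- exact: leey.
Qed.

End Final.

Theorem proposition2p34 (R : realType) (n d : nat)
  (iota : 'rV[R]_d -> 'M[R[i]]_n) (W : 'M[R[i]]_n)
  (iota_lin : forall (a : R) (u v : 'rV[R]_d),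
      iota (a *: u + v) = (a%:C) *: iota u + iota v)
  (iota_herm : forall v, is_hermitian (iota v))
  (W_herm : is_hermitian W) :
  biconjugate (F_HK iota W) = F_e iota W /\
  biconjugate (F_p iota W) = F_e iota W.
Proof.
have bF := biconj_Fe W iota_lin.
have [e1 e2] := Sup_eq iota_lin iota_herm W_herm.
split; rewrite -[RHS]bF; apply: biconj_congr; apply: funext => v.
  by rewrite (conj_FHK W iota_lin) (conj_Fe W iota_lin) e1.
by rewrite (conj_Fp W iota_lin) (conj_Fe W iota_lin) e2.
Qed.
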